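(* Let $p$ be a prime and let $B$ be a finite brace whose order is a power of $p$. If $B$ is supersoluble, then $B$ is centrally nilpotent.
   Context: A brace (skew left brace) is a set $B$ with two binary operations $+$ and $\cdot$ such that $(B,+)$ and $(B,\cdot)$ are groups and $a(b+c)=ab-a+ac$ for all $a,b,c\in B$. $\lambda_a(b)=-a+ab$ defines a homomorphism $\lambda\colon(B,\cdot)\to\operatorname{Aut}(B,+)$. An ideal is a subset that is a subgroup of both groups, normal in both, and invariant under all $\lambda_b$; quotients by ideals are braces. $\operatorname{Soc}(B)=\operatorname{Ker}\lambda\cap Z(B,+)$, $\zeta(B)=\operatorname{Soc}(B)\cap Z(B,\cdot)$; $\zeta_0(B)=\{0\}$, $\zeta_{k+1}(B)/\zeta_k(B)=\zeta(B/\zeta_k(B))$; $B$ is centrally nilpotent if $B=\zeta_m(B)$ for some $m$. $B$ is supersoluble if there is a finite chain of ideals $\{0\}=I_0\le\dots\le I_n=B$ such that for each $i$, either $(I_{i+1}/I_i,+)$ is infinite cyclic and $I_{i+1}/I_i\le\operatorname{Soc}(B/I_i)$, or $I_{i+1}/I_i$ has prime order. *)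

(* Defs.v *)
From mathcomp Require Import all_boot all_algebra.
Set Implicit Arguments. Unset Strict Implicit. Unset Printing Implicit Defensive.

(* A (skew left) brace on a carrier T: two group structures and the brace law
   a(b+c) = ab - a + ac.  (B,+) need not be abelian. *)
Record brace (T : Type) := Brace {
  badd : T -> T -> T; bzero : T; bneg : T -> T;
  bmul : T -> T -> T; bone : T; binv : T -> T;
  baddA : forall a b c, badd a (badd b c) = badd (badd a b) c;
  badd0r : forall a, badd a bzero = a;
  badd0l : forall a, badd bzero a = a;
  baddNr : forall a, badd a (bneg a) = bzero;
  baddNl : forall a, badd (bneg a) a = bzero;
  bmulA : forall a b c, bmul a (bmul b c) = bmul (bmul a b) c;
  bmul1r : forall a, bmul a bone = a;
  bmul1l : forall a, bmul bone a = a;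
  bmulVr : forall a, bmul a (binv a) = bone;
  bmulVl : forall a, bmul (binv a) a = bone;
  bbrace : forall a b c,
    bmul a (badd b c) = badd (badd (bmul a b) (bneg a)) (bmul a c)
}.

Section BraceDefs.
Variables (T : finType) (B : brace T).
Local Notation "a + b" := (badd B a b).
Local Notation "- a" := (bneg B a).
Local Notation "a * b" := (bmul B a b).
Local Notation "0" := (bzero B).
Local Notation "1" := (bone B).

Definition blambda (a b : T) : T := - a + a * b.

Definition is_ideal (I : {set T}) : Prop :=
  (0 \in I /\ {in I &, forall x y, x + y \in I} /\ {in I, forall x, - x \in I}) /\
  (1 \in I /\ {in I &, forall x y, x * y \in I} /\ {in I, forall x, binv B x \in I}) /\
  (forall b, {in I, forall x, b + x + - b \in I}) /\
  (forall b, {in I, forall x, b * x * binv B b \in I}) /\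
  (forall b, {in I, forall x, blambda b x \in I}).

(* For an ideal J: the coset of a lies in Soc(B/J), i.e. a+J is in Ker lambda
   of B/J and in the centre of (B/J,+). *)
Definition in_soc_mod (J : {set T}) (a : T) : bool :=
  [forall b, (- b + blambda a b \in J) && (a + b + - a + - b \in J)].

(* The coset a+J lies in zeta(B/J) = Soc(B/J) ∩ Z(B/J, .). *)
Definition in_zeta_mod (J : {set T}) (a : T) : bool :=
  in_soc_mod J a && [forall b, a * b * binv B a * binv B b \in J].

Fixpoint zeta_k (k : nat) : {set T} :=
  match k with
  | O => [set 0]
  | S k' => [set a | in_zeta_mod (zeta_k k') a]
  end.

Definition centrally_nilpotent : Prop := exists m, zeta_k m = setT.

Definition bnmul (n : nat) (g : T) : T := iter n (fun x => g + x) 0.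
Definition bzmul (z : int) (g : T) : T :=
  match z with Posz n => bnmul n g | Negz n => - bnmul n.+1 g end.

(* (I/J,+) is infinite cyclic (J ideal, J ⊆ I): some g in I whose integer
   multiples give pairwise distinct cosets mod J that cover I. *)
Definition infinite_cyclic_factor (I J : {set T}) : Prop :=
  exists2 g, g \in I &
    (forall z1 z2 : int, - bzmul z2 g + bzmul z1 g \in J -> z1 = z2) /\
    {in I, forall x, exists z : int, - bzmul z g + x \in J}.

(* |I/J| is prime (J a subgroup of I, so |I/J| = |I|/|J|). *)
Definition prime_order_factor (I J : {set T}) : Prop :=
  exists2 q, prime q & #|I| = (q * #|J|)%N.

Definition supersoluble : Prop :=
  exists n (I : nat -> {set T}),
    [/\ I 0%N = [set 0], I n = setT,
        (forall i, (i <= n)%N -> is_ideal (I i)) &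
        (forall i, (i < n)%N -> I i \subset I i.+1 /\
           ((infinite_cyclic_factor (I i.+1) (I i) /\
             {in I i.+1, forall x, in_soc_mod (I i) x})
            \/ prime_order_factor (I i.+1) (I i)))].

End BraceDefs.

(* Main.v *)
From HB Require Import structures.
From mathcomp Require Import all_boot all_algebra all_fingroup all_solvable.
Set Implicit Arguments. Unset Strict Implicit. Unset Printing Implicit Defensive.
Import GroupScope.
Require Import Defs.

Lemma core (gT : finGroupType) (J I : {group gT}) (p N : nat) (f : gT -> gT) :
  prime p -> J \subset I -> #|I| = (p * #|J|)%N -> p.-nat N ->
  (forall y, iter N f y = y) ->
  {in I, forall x, f x \in I} ->
  {in I &, forall x y, x^-1 * y \in J -> (f x)^-1 * f y \in J} ->
  f 1 \in J ->
  {in I, forall x, x^-1 * f x \in J}.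
Proof.
move=> pp sJI cI pN fN fI fr f1.
have N0 : 0 < N by case/andP: pN.
have finj : injective f.
  move=> y z e; rewrite -(fN y) -(fN z) -(prednK N0) !iterSr e //.
pose F := perm (imset_inj finj).
have FE A : F A = f @: A by rewrite permE.
have FX k A : (F ^+ k) A = iter k f @: A.
  elim: k => [|k IH]; first by rewrite expg0 perm1 /= imset_id.
  by rewrite expgSr permM IH FE -imset_comp.
have FN : F ^+ N = 1.
  apply/permP => A; rewrite FX perm1.
  by rewrite (eq_imset _ fN) imset_id.
have pF : p.-group <[F]>.
  by rewrite /pgroup -orderE; apply: pnat_dvd pN; rewrite order_dvdn FN.
set S := lcosets J I.
have cosF x : x \in I -> F (x *: J) = f x *: J.
  move=> xI; apply/eqP; rewrite eqEcard FE card_imset // !card_lcoset leqnn andbT.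
  apply/subsetP => _ /imsetP[y yJ ->].
  have yI : y \in I.
    case/lcosetP: yJ => a aJ ->; rewrite groupM //; exact: (subsetP sJI).
  by rewrite mem_lcoset; apply: fr => //; rewrite -mem_lcoset.
have fwd A : A \in S -> F A \in S.
  case/imsetP => x xI ->; rewrite lcosetE cosF // -lcosetE.
  by apply: imset_f; apply: fI.
have fwdk k A : A \in S -> (F ^+ k) A \in S.
  elim: k A => [|k IH] A AS; first by rewrite expg0 perm1.
  by rewrite expgS permM; apply: IH; apply: fwd.
have FS A : (F A \in S) = (A \in S).
  apply/idP/idP; last exact: fwd.
  move=> FAS; have := fwdk N.-1 _ FAS.
  by rewrite -permM -expgS prednK // FN perm1.
have acts : [acts <[F]>, on S | 'P].
  apply/actsP => g /cycleP[k ->] A /=.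
  elim: k A => [|k IH] A; first by rewrite /aperm expg0 perm1.
  by rewrite /aperm expgS permM; have := IH (F A); rewrite /aperm => ->; exact: FS.
have := pgroup_fix_mod pF acts.
have cS : #|S| = p.
  rewrite card_lcosets; apply/eqP; rewrite -(eqn_pmul2l (cardG_gt0 J)).
  by rewrite (Lagrange sJI) cI mulnC.
rewrite cS modnn => /esym/eqP; rewrite -/(dvdn p _) => dvdF.
have JS : (J : {set gT}) \in S.
  by rewrite -{1}(lcoset1 J) -lcosetE; apply: imset_f; apply: group1.
have JF : (J : {set gT}) \in 'Fix_(S | 'P)(<[F]>).
  rewrite inE JS; apply/afixP => g /cycleP[k ->]; rewrite /=/aperm.
  apply: permX_fix; rewrite -{1}(lcoset1 J) cosF ?group1 //.
  by rewrite lcoset_id.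
have FixS : 'Fix_(S | 'P)(<[F]>) = S.
  apply/eqP; rewrite eqEcard subsetIl cS.
  have : 0 < #|'Fix_(S | 'P)(<[F]>)| by apply/card_gt0P; exists (J : {set gT}).
  by move/(dvdn_leq)/(_ dvdF).
move=> x xI.
have : x *: J \in 'Fix_(S | 'P)(<[F]>).
  by rewrite FixS -lcosetE; apply: imset_f.
rewrite inE => /andP[_ /afixP /(_ F (cycle_id F))]; rewrite /=/aperm cosF // => e.
by rewrite -mem_lcoset -e lcoset_refl.
Qed.

Section GenGroup.
Variables (gT : finGroupType) (J : {group gT}).
Hypothesis Jn : forall b x, x \in J -> b * x * b^-1 \in J.
Definition rr (a c : gT) := c^-1 * a \in J.

Lemma rr_refl a : rr a a. Proof. by rewrite /rr mulVg group1. Qed.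
Lemma rr_sym a c : rr a c -> rr c a.
Proof. by rewrite /rr => h; have := groupVr h; rewrite invMg invgK. Qed.
Lemma rr_trans a c d : rr a c -> rr c d -> rr a d.
Proof.
rewrite /rr => h1 h2; have := groupM h2 h1.
by rewrite mulgA mulgK.
Qed.
Lemma rr_mul a a' c c' : rr a a' -> rr c c' -> rr (a * c) (a' * c').
Proof.
rewrite /rr => h1 h2.
have e : (a' * c')^-1 * (a * c) = (c'^-1 * c) * (c^-1 * (a'^-1 * a) * c^-1^-1).
  by rewrite invgK invMg !mulgA mulgK.
by rewrite e groupM // Jn.
Qed.
Lemma rr_1 a : rr a 1 = (a \in J). Proof. by rewrite /rr invg1 mul1g. Qed.

Lemma comm1 x : (forall b, x^-1 * (b * x * b^-1) \in J) ->
  forall b, rr (x * b) (b * x).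
Proof.
move=> H b; have := H b^-1; rewrite invgK /rr invMg.
by rewrite !mulgA.
Qed.
Lemma comm2 x : (forall b, x^-1 * (b * x * b^-1) \in J) ->
  forall b, x * b * x^-1 * b^-1 \in J.
Proof.
move=> H b; have h := rr_mul (comm1 H b) (rr_refl (x^-1 * b^-1)).
have e1 : b * x * (x^-1 * b^-1) = 1 by rewrite mulgA mulgK mulgV.
by rewrite e1 rr_1 !mulgA in h.
Qed.
End GenGroup.

Section Raw.
Variables (T : finType) (B : brace T).
Local Notation add := (badd B).
Local Notation neg := (bneg B).
Local Notation mul := (bmul B).
Local Notation inv := (binv B).
Local Notation z0 := (bzero B).
Local Notation lam := (blambda B).

Definition addT (_ : brace T) : Type := T.
HB.instance Definition _ := Finite.on (addT B).
HB.instance Definition _ := Finite_isGroup.Build (addT B) (@baddA _ B) (@badd0l _ B) (@baddNl _ B).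
Definition mulT (_ : brace T) : Type := T.
HB.instance Definition _ := Finite.on (mulT B).
HB.instance Definition _ := Finite_isGroup.Build (mulT B) (@bmulA _ B) (@bmul1l _ B) (@bmulVl _ B).

Lemma cardA : #|[set: (addT B)]| = #|T|.
Proof. by rewrite cardsT; apply: (@bij_eq_card (addT B) T id); exists id. Qed.
Lemma cardM : #|[set: (mulT B)]| = #|T|.
Proof. by rewrite cardsT; apply: (@bij_eq_card (mulT B) T id); exists id. Qed.

Definition gA (I : {set T}) : {set (addT B)} := [set x : (addT B) | (x : T) \in I].
Definition gM (I : {set T}) : {set (mulT B)} := [set x : (mulT B) | (x : T) \in I].

Lemma cardgA (I : {set T}) : #|gA I| = #|I|.
Proof.
have -> : gA I = [set (x : (addT B)) | x : T in I].
  apply/setP => x; rewrite inE; apply/idP/imsetP => [xI|[y yI ->]]; [by exists x|by []].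
by apply: card_imset.
Qed.
Lemma cardgM (I : {set T}) : #|gM I| = #|I|.
Proof.
have -> : gM I = [set (x : (mulT B)) | x : T in I].
  apply/setP => x; rewrite inE; apply/idP/imsetP => [xI|[y yI ->]]; [by exists x|by []].
by apply: card_imset.
Qed.

Lemma gA_group I : is_ideal B I -> group_set (gA I).
Proof.
case=> [[I0 [ID IN]] _]; apply/group_setP; split; first by rewrite inE.
by move=> x y; rewrite !inE; apply: ID.
Qed.
Lemma gM_group I : is_ideal B I -> group_set (gM I).
Proof.
case=> _ [[I1 [IM IV]] _]; apply/group_setP; split; first by rewrite inE.
by move=> x y; rewrite !inE; apply: IM.
Qed.

Lemma addKl a b : add (neg a) (add a b) = b. Proof. exact: (@mulKg (addT B) a b). Qed.
Lemma addKVl a b : add a (add (neg a) b) = b. Proof. exact: (@mulVKg (addT B) a b). Qed.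
Lemma negK a : neg (neg a) = a. Proof. exact: (@invgK (addT B) a). Qed.
Lemma negD a b : neg (add a b) = add (neg b) (neg a). Proof. exact: (@invMg (addT B) a b). Qed.
Lemma neg0 : neg z0 = z0. Proof. exact: (@invg1 (addT B)). Qed.

Lemma mul_a0 a : mul a z0 = a.
Proof.
have e := bbrace B a z0 z0; rewrite badd0l in e.
have := congr1 (add (neg (mul a z0))) e.
rewrite baddNl !baddA baddNl badd0l => e2.
have := congr1 (add a) e2.
by rewrite badd0r addKVl.
Qed.
Lemma one0 : bone B = z0.
Proof. by rewrite -(mul_a0 (bone B)) bmul1l. Qed.

Lemma lam_add b u v : lam b (add u v) = add (lam b u) (lam b v).
Proof. by rewrite /blambda bbrace !baddA. Qed.
Lemma lam0 b : lam b z0 = z0.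
Proof. by rewrite /blambda mul_a0 baddNl. Qed.
Lemma lam_neg b u : lam b (neg u) = neg (lam b u).
Proof.
have := lam_add b u (neg u); rewrite baddNr lam0 => e.
have := congr1 (add (neg (lam b u))) e.
by rewrite badd0r addKl.
Qed.
Lemma lam_one y : lam (bone B) y = y.
Proof. by rewrite /blambda bmul1l one0 neg0 badd0l. Qed.
Lemma lam_comp a c y : lam a (lam c y) = lam (mul a c) y.
Proof.
have -> : lam c y = add (neg c) (mul c y) by [].
rewrite lam_add lam_neg /blambda bmulA.
rewrite negD negK -!baddA addKVl //.
Qed.
Lemma mul_lam a c : mul a c = add a (lam a c).
Proof. by rewrite /blambda addKVl. Qed.

Lemma rE (J : {set T}) : is_ideal B J -> forall a c,
  (add (neg c) a \in J) = (mul (inv c) a \in J).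
Proof.
move=> [_ [_ [_ [_ Jl]]]] a c; apply/idP/idP => h.
  have -> : a = add c (add (neg c) a) by rewrite addKVl.
  rewrite bbrace bmulVl one0 badd0l; exact: Jl.
have -> : a = mul c (mul (inv c) a) by rewrite bmulA bmulVr bmul1l.
exact: Jl.
Qed.
End Raw.

Lemma iter_conj (gT : finGroupType) (b : gT) k y :
  iter k (fun y => b * y * b^-1) y = b ^+ k * y * (b ^+ k)^-1.
Proof.
elim: k => [|k IH]; first by rewrite expg0 invg1 mul1g mulg1.
by rewrite iterS IH expgS invMg !mulgA.
Qed.

Section Layer.
Variables (T : finType) (B : brace T).
Local Notation add := (badd B).
Local Notation neg := (bneg B).
Local Notation mul := (bmul B).
Local Notation inv := (binv B).
Local Notation z0 := (bzero B).
Local Notation lam := (blambda B).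

Lemma iter_lam (b : mulT B) k y : iter k (lam b) y = lam (b ^+ k) y.
Proof.
elim: k y => [|k IH] y; first by rewrite expg0 /=; exact: (esym (lam_one B y)).
by rewrite iterS IH lam_comp expgS.
Qed.

Lemma in_zeta_mono (J K : {set T}) x : J \subset K ->
  in_zeta_mod B J x -> in_zeta_mod B K x.
Proof.
move=> /subsetP sJK /andP[/forallP h1 /forallP h2]; apply/andP; split.
  apply/forallP => b; have /andP[u v] := h1 b; apply/andP; split; exact: sJK.
by apply/forallP => b; apply: sJK.
Qed.

Lemma no_icf (I J : {set T}) : z0 \in J -> ~ infinite_cyclic_factor B I J.
Proof.
move=> J0 [g _ [inj _]].
have finj : injective (fun k : 'I_#|T|.+1 => bnmul B k g).
  move=> k1 k2 /= e; apply: val_inj => /=.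
  have := inj (Posz k1) (Posz k2); rewrite /= e baddNl => /(_ J0) [].
  done.
by have := leq_card _ finj; rewrite card_ord ltnn.
Qed.

Lemma layer (p n : nat) (J I : {set T}) q :
  prime p -> #|T| = (p ^ n)%N -> is_ideal B J -> is_ideal B I ->
  J \subset I -> prime q -> #|I| = (q * #|J|)%N ->
  {in I, forall x, in_zeta_mod B J x}.
Proof.
move=> pp cT HJ HI sJI qp cIJ x xI.
pose JA := Group (gA_group HJ); pose IA := Group (gA_group HI).
pose JM := Group (gM_group HJ); pose IM := Group (gM_group HI).
have [[J0 [JD JN]] [[J1 [JM1 JV]] [Jc [Jcm Jl]]]] := HJ.
have [[I0 [ID IN]] [[I1 [IM1 IV]] [Ic [Icm Il]]]] := HI.
have sA : JA \subset IA by apply/subsetP => y; rewrite !inE; apply: (subsetP sJI).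
have sM : JM \subset IM by apply/subsetP => y; rewrite !inE; apply: (subsetP sJI).
have pN : p.-nat #|T| by rewrite cT pnatX pnat_id.
have qp' : q = p.
  have : q %| #|T|.
    apply: (@dvdn_trans #|I|); first by rewrite cIJ dvdn_mulr.
    rewrite -(cardgA B I) -(cardA B); exact: (cardSg (subsetT IA)).
  move/pnat_dvd/(_ pN); rewrite pnatE //; by move/eqP.
subst q.
have cIA : #|IA| = (p * #|JA|)%N by rewrite /= !cardgA.
have cIM : #|IM| = (p * #|JM|)%N by rewrite /= !cardgM.
have JAn : forall (b x : addT B), x \in JA -> b * x * b^-1 \in JA.
  by move=> b y; rewrite !inE; apply: Jc.
have JMn : forall (b x : mulT B), x \in JM -> b * x * b^-1 \in JM.
  by move=> b y; rewrite !inE; apply: Jcm.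
have xIA : (x : addT B) \in IA by rewrite inE.
have xIM : (x : mulT B) \in IM by rewrite inE.
have K1 : forall b : addT B, (x : addT B)^-1 * (b * x * b^-1) \in JA.
  move=> b; apply: (core (f := fun y : addT B => b * y * b^-1) pp sA cIA pN) => //.
  - by move=> y; rewrite iter_conj -(cardA B) expg_cardG ?inE // invg1 mulg1 mul1g.
  - by move=> y; rewrite !inE; apply: Ic.
  - move=> y z _ _ h; apply: (rr_mul JAn); last exact: rr_refl.
    exact: (rr_mul JAn (rr_refl _ _) h).
  - by rewrite mulg1 mulgV group1.
have K2 : forall b : mulT B, (x : mulT B)^-1 * (b * x * b^-1) \in JM.
  move=> b; apply: (core (f := fun y : mulT B => b * y * b^-1) pp sM cIM pN) => //.
  - by move=> y; rewrite iter_conj -(cardM B) expg_cardG ?inE // invg1 mulg1 mul1g.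
  - by move=> y; rewrite !inE; apply: Icm.
  - move=> y z _ _ h; apply: (rr_mul JMn); last exact: rr_refl.
    exact: (rr_mul JMn (rr_refl _ _) h).
  - by rewrite mulg1 mulgV group1.
have K3 : forall b : T, (x : addT B)^-1 * (lam b x : addT B) \in JA.
  move=> b; apply: (core (f := (lam b : addT B -> addT B)) pp sA cIA pN) => //.
  - move=> y; rewrite (iter_lam (b : mulT B)) -(cardM B) expg_cardG ?inE //.
    exact: lam_one.
  - by move=> y; rewrite !inE; apply: Il.
  - move=> y z _ _; rewrite !inE => h.
    have e : add (neg (lam b y)) (lam b z) = lam b (add (neg y) z).
      by rewrite lam_add lam_neg.
    by move: (Jl b _ h); rewrite -e.
  - by rewrite inE /= lam0.
rewrite /in_zeta_mod /in_soc_mod; apply/andP; split; last first.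
  by apply/forallP => b; have := comm2 JMn K2 (b : mulT B); rewrite inE.
apply/forallP => b; apply/andP; split; last first.
  by have := comm2 JAn K1 (b : addT B); rewrite inE.
have s1 : rr JA (mul x b : addT B) (mul b x).
  rewrite /rr inE /= (rE HJ); have := comm1 K2 (b : mulT B); rewrite /rr inE.
  done.
rewrite (mul_lam B x b) (mul_lam B b x) in s1.
have s2 : rr JA (add b (lam b x) : addT B) (add b x) := rr_mul JAn (rr_refl _ _) (K3 b).
have s3 : rr JA (add b x : addT B) (add x b) := rr_sym (comm1 K1 (b : addT B)).
have s4 := rr_trans (rr_trans s1 s2) s3.
have s5 := rr_mul JAn (rr_refl _ (neg x : addT B)) s4.
rewrite !mulKg /rr inE in s5.
exact: s5.
Qed.
End Layer.

Theorem theorem3p7 (p : nat) (T : finType) (B : brace T) :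
  prime p -> (exists n, #|T| = (p ^ n)%N) ->
  supersoluble B -> centrally_nilpotent B.
Proof.
move=> pp [m cT] [n [I [I0 In Iid Istep]]]; exists n.
have key : forall i, (i <= n)%N -> I i \subset zeta_k B i.
  elim => [|i IH] lei; first by rewrite I0.
  have [sub hyp] := Istep i lei.
  have ideal_i := Iid i (ltnW lei).
  apply/subsetP => x xI; rewrite inE.
  case: hyp => [[icf _] | [q qp cq]].
    by exfalso; apply: (no_icf _ icf); case: ideal_i => [[]].
  apply: (in_zeta_mono (IH (ltnW lei))).
  exact: (layer pp cT ideal_i (Iid i.+1 lei) sub qp cq).
by apply/eqP; rewrite eqEsubset subsetT -In key.
Qed.
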